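(* Let $G$ be a finite connected graph with node set $V$ and diameter $\operatorname{diam}(G)$. Algorithm 3 (described in the context), for any way of choosing the node $x$ in each iteration, terminates and outputs a node $b$ and a set $U$ such that $e(b)=\operatorname{diam}(G)$ and $U$ is a diameter certificate of $G$ with $|U|\le\pi_{1/3}$, using $O(\pi_{1/3})$ one-to-all distance queries. Here, for $\alpha>0$, $\pi_\alpha$ is the maximum size of a packing for the collection $\mathcal{D}_\alpha=\{B(u,\alpha(\operatorname{diam}(G)-e(u))):u\in V\}$. Moreover, $|U|\le\frac{\pi_{1/3}}{\pi_{[1]}}\cdot\kappa$, where $\kappa$ is the minimum size of a diameter certificate of $G$ and $\pi_{[1]}$ is the maximum size of a packing for $\mathcal{D}_{[1]}=\{B[u,\operatorname{diam}(G)-e(u)]:u\in V\}$.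
   Context: $G$ is undirected, unweighted, connected with finite node set $V$; $d$ is the shortest-path distance, $e(u)=\max_v d(u,v)$, $\operatorname{diam}(G)=\max_u e(u)$. Balls: $B[u,\rho]=\{v: d(u,v)\le\rho\}$, $B(u,\rho)=\{v:d(u,v)<\rho\}$. A packing for a collection $\mathcal{S}$ of subsets of $V$ is a set $P\subseteq V$ such that every set of $\mathcal{S}$ contains at most one element of $P$. For $U\subseteq V$ let $e^U(v)=\min_{x\in U}(d(v,x)+e(x))$ ($=+\infty$ if $U=\emptyset$). A diameter certificate is a set $U$ with $e^U(v)\le\operatorname{diam}(G)$ for all $v$. A one-to-all distance query from $x$ computes $(d(x,v))_{v\in V}$. Algorithm 3: start with $U=K=\emptyset$. Repeat: select $u$ with $e^U(u)$ maximal (ties arbitrary); query from $u$, compute $e(u)$, add $u$ to $K$; choose any node $x$ with $d(u,x)+e(x)=e(u)$ (e.g. $x=u$); query from $x$, compute $e(x)$, add $x$ to $U$ and update $e^U$. Stop as soon as $\max_{w\in K}e(w)\ge\max_{v\in V}e^U(v)$, and output $b\in K$ maximizing $e$ over $K$, together with $e(b)$ and $U$. *)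

(* Defs.v *)
(* Graph = symmetric irreflexive relation on a finType. *)
From mathcomp Require Import all_boot.
Set Implicit Arguments. Unset Strict Implicit. Unset Printing Implicit Defensive.

Section Graph.
Variables (T : finType) (e : rel T).

Definition reach (n : nat) (u : T) : {set T} :=
  iter n (fun S => S :|: [set y | [exists x in S, e x y]]) [set u].

(* shortest-path distance: least n with v in reach n u (all distances are
   < #|T| in a connected graph; #|T| is returned only if unreachable) *)
Definition dist (u v : T) : nat := find (fun n => v \in reach n u) (iota 0 #|T|).

Definition ecc (u : T) : nat := \max_(v : T) dist u v.
Definition diam : nat := \max_(u : T) ecc u.

(* extended naturals: None = +infinity *)
Definition omin (a b : option nat) : option nat :=
  match a, b with
  | None, _ => b
  | _, None => a
  | Some x, Some y => Some (minn x y)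
  end.
Definition oleq (a b : option nat) : bool :=
  match a, b with
  | _, None => true
  | None, Some _ => false
  | Some x, Some y => x <= y
  end.

Definition eU (U : {set T}) (v : T) : option nat :=
  \big[omin/None]_(x in U) Some (dist v x + ecc x).

Definition diam_certificate (U : {set T}) : bool :=
  [forall v, oleq (eU U v) (Some diam)].

(* packings of the collections D_{1/3} (open balls B(u,(diam-e(u))/3))
   and D_[1] (closed balls B[u, diam-e(u)]) *)
Definition open_ball3 (u : T) : {set T} := [set v | 3 * dist u v < diam - ecc u].
Definition closed_ball1 (u : T) : {set T} := [set v | dist u v <= diam - ecc u].
Definition packing (D : T -> {set T}) (P : {set T}) : bool :=
  [forall u, #|P :&: D u| <= 1].
Definition pi_third : nat := \max_(P : {set T} | packing open_ball3 P) #|P|.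
Definition pi_closed1 : nat := \max_(P : {set T} | packing closed_ball1 P) #|P|.
(* kappa = minimum size of a diameter certificate (the whole node set is one) *)
Definition kappa : nat := \big[minn/#|T|]_(U : {set T} | diam_certificate U) #|U|.

(* Algorithm 3. A run is the sequence of pairs (u_i, x_i) chosen in the
   successive iterations; K = {u_i}, U = {x_i}. *)
Definition Kof (r : seq (T * T)) : seq T := map fst r.
Definition Uof (r : seq (T * T)) : {set T} := [set x in map snd r].

Definition stopped (r : seq (T * T)) : bool :=
  [forall v, oleq (eU (Uof r) v) (Some (\max_(w <- Kof r) ecc w))].

Definition legal_step (pre : seq (T * T)) (p : T * T) : Prop :=
  (forall v, oleq (eU (Uof pre) v) (eU (Uof pre) p.1)) /\
  dist p.1 p.2 + ecc p.2 = ecc p.1.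

Definition valid_run (r : seq (T * T)) : Prop :=
  forall pre p post, r = pre ++ p :: post ->
    ~~ stopped pre /\ legal_step pre p.

End Graph.

(* Main.v *)
Require Import Defs.
From mathcomp Require Import all_boot.
From mathcomp Require Import zify.

Set Implicit Arguments. Unset Strict Implicit. Unset Printing Implicit Defensive.

Section Proofs.
Variables (T : finType) (e : rel T).
Hypothesis e_sym : symmetric e.

Lemma reach_S n u v : (v \in reach e n.+1 u) =
  (v \in reach e n u) || [exists x in reach e n u, e x v].
Proof. by rewrite /reach iterS !inE. Qed.

Lemma reach0 u v : (v \in reach e 0 u) = (v == u).
Proof. by rewrite /reach /= inE. Qed.

Lemma reach_mono n k u : reach e n u \subset reach e (n + k) u.
Proof.
elim: k => [|k IH]; first by rewrite addn0 subxx.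
apply: subset_trans IH _; apply/subsetP => v Hv; by rewrite addnS reach_S Hv.
Qed.

Lemma reach_trans m n u v w : v \in reach e m u -> w \in reach e n v ->
  w \in reach e (m + n) u.
Proof.
move=> Hv; elim: n w => [|n IH] w.
  by rewrite reach0 => /eqP ->; rewrite addn0.
rewrite reach_S addnS => /orP [Hw | /existsP [x /andP [Hx Hxw]]].
  by rewrite reach_S IH.
rewrite reach_S; apply/orP; right; apply/existsP; exists x; by rewrite IH.
Qed.

Lemma reach_sym n u v : v \in reach e n u -> u \in reach e n v.
Proof.
elim: n u v => [|n IH] u v.
  by rewrite reach0 => /eqP ->; rewrite reach0.
rewrite reach_S => /orP [Hv | /existsP [x /andP [Hx Hxv]]].
  have H := IH _ _ Hv; have := subsetP (reach_mono n 1 v) _ H; by rewrite addn1.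
have H1 : x \in reach e 1 v.
  rewrite reach_S; apply/orP; right; apply/existsP; exists v.
  by rewrite reach0 eqxx e_sym.
have := reach_trans H1 (IH _ _ Hx); by rewrite add1n.
Qed.

Lemma dist_leN u v : dist e u v <= #|T|.
Proof. by rewrite /dist -{2}(size_iota 0 #|T|) find_size. Qed.

Lemma dist_le n u v : v \in reach e n u -> dist e u v <= n.
Proof.
move=> H; rewrite leqNgt; apply/negP => Hlt.
have Hn : n < #|T| := leq_trans Hlt (dist_leN u v).
move: Hlt; rewrite /dist => Hlt.
have := before_find 0 Hlt; rewrite nth_iota // add0n H //.
Qed.

Lemma dist_reach u v : dist e u v < #|T| -> v \in reach e (dist e u v) u.
Proof.
rewrite /dist => H.
have Hh : has (fun n => v \in reach e n u) (iota 0 #|T|)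
  by rewrite has_find size_iota.
have := nth_find 0 Hh; rewrite nth_iota ?add0n //.
Qed.

Lemma dist_tri u v w : dist e u w <= dist e u v + dist e v w.
Proof.
case: (ltnP (dist e u v) #|T|) => H1; last first.
  exact: leq_trans (dist_leN _ _) (leq_trans H1 (leq_addr _ _)).
case: (ltnP (dist e v w) #|T|) => H2; last first.
  exact: leq_trans (dist_leN _ _) (leq_trans H2 (leq_addl _ _)).
exact: dist_le (reach_trans (dist_reach H1) (dist_reach H2)).
Qed.

Lemma dist_sym u v : dist e u v = dist e v u.
Proof.
wlog suffices H : u v / dist e u v <= dist e v u.
  by apply/eqP; rewrite eqn_leq !H.
case: (ltnP (dist e v u) #|T|) => H.
  exact: dist_le (reach_sym (dist_reach H)).
exact: leq_trans (dist_leN _ _) H.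
Qed.

Lemma dist0 u : dist e u u = 0.
Proof. apply/eqP; rewrite -leqn0; apply: dist_le; by rewrite reach0. Qed.

Lemma ecc_ge u v : dist e u v <= ecc e u.
Proof. exact: (leq_bigmax v). Qed.

Lemma ecc_tri u v : ecc e u <= dist e u v + ecc e v.
Proof.
apply/bigmax_leqP => w _; apply: leq_trans (dist_tri u v w) _.
by rewrite leq_add2l ecc_ge.
Qed.

Lemma ecc_diam u : ecc e u <= diam e.
Proof. exact: (leq_bigmax u). Qed.

Lemma eU_ge (U : {set T}) v : oleq (Some (ecc e v)) (eU e U v).
Proof.
rewrite /eU; apply: (big_ind (fun a => oleq (Some (ecc e v)) a)) => //.
  move=> [a|] [b|] //= Ha Hb; by rewrite leq_min Ha Hb.
move=> x _; exact: ecc_tri.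
Qed.

Lemma omin_seq_le (s : seq T) (U : {set T}) (F : T -> nat) x :
  x \in s -> x \in U -> oleq (\big[omin/None]_(i <- s | i \in U) Some (F i)) (Some (F x)).
Proof.
elim: s => [|y s IH] //; rewrite inE big_cons => /orP [/eqP <- | Hs] Hx.
  rewrite Hx; case: (\big[omin/None]_(i <- s | i \in U) Some (F i)) => //= b.
  exact: geq_minl.
have := IH Hs Hx; case: (y \in U) => //.
case: (\big[omin/None]_(i <- s | i \in U) Some (F i)) => //= b Hb.
exact: leq_trans (geq_minr _ _) Hb.
Qed.

Lemma eU_le (U : {set T}) v x : x \in U -> oleq (eU e U v) (Some (dist e v x + ecc e x)).
Proof.
move=> Hx; rewrite /eU.
exact: (omin_seq_le (fun x => dist e v x + ecc e x) (mem_index_enum x) Hx).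
Qed.

Lemma eU_ex (U : {set T}) v k : oleq (eU e U v) (Some k) ->
  exists2 x, x \in U & dist e v x + ecc e x <= k.
Proof.
rewrite /eU; apply: (big_ind (fun a => oleq a (Some k) ->
  exists2 x, x \in U & dist e v x + ecc e x <= k)) => //.
  move=> [a|] [b|] //= Ha Hb.
  by rewrite geq_min => /orP [/Ha | /Hb].
move=> x Hx H; by exists x.
Qed.

Lemma valid_rcons r p : valid_run e (rcons r p) ->
  [/\ valid_run e r, ~~ stopped e r & legal_step e r p].
Proof.
move=> H; split.
- move=> pre q post Hr; apply: (H pre q (rcons post p)); by rewrite Hr rcons_cat.
- by case: (H r p [::] (esym (cats1 r p))).
- by case: (H r p [::] (esym (cats1 r p))).
Qed.

Lemma valid_rconsI r p : valid_run e r -> ~~ stopped e r -> legal_step e r p ->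
  valid_run e (rcons r p).
Proof.
move=> Hr Hs Hl pre q post; case/lastP: post => [|post z].
  by rewrite cats1 => /rcons_inj [<- <-].
have -> : pre ++ q :: rcons post z = rcons (pre ++ q :: post) z by rewrite rcons_cat.
move/rcons_inj => [Er _]; exact: Hr Er.
Qed.

Lemma run_key pre p : valid_run e (rcons pre p) -> forall q, q \in pre ->
  exists M, [/\ ecc e q.1 < M, M <= dist e p.1 q.2 + ecc e q.2, diam e <= M
     & dist e q.1 q.2 + ecc e q.2 = ecc e q.1].
Proof.
move=> /valid_rcons [Hv Hs [Hmax _]] q Hq.
have Hleg : dist e q.1 q.2 + ecc e q.2 = ecc e q.1.
  move: Hv; case/splitPr: Hq => p1 p2 Hv.
  by case: (Hv p1 q p2 erefl) => _ [].
have HU : q.2 \in Uof pre by rewrite /Uof inE map_f.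
have HK : ecc e q.1 <= \max_(w <- Kof pre) ecc e w.
  by apply: (leq_bigmax_seq q.1) => //; rewrite map_f.
move/forallPn: Hs => [v Hv'].
have := Hmax v; have := eU_le p.1 HU.
case E: (eU e (Uof pre) p.1) => [M|] // HM1 Hvp.
exists M; split => //.
- move: Hv' Hvp; case: (eU e (Uof pre) v) => //= a Ha Hb.
  rewrite -ltnNge in Ha; exact: leq_ltn_trans HK (leq_trans Ha Hb).
- apply/bigmax_leqP => w _.
  have := eU_ge (Uof pre) w; have := Hmax w; rewrite E.
  case: (eU e (Uof pre) w) => //= a h1 h2; exact: leq_trans h2 h1.
Qed.

Lemma run_pack r : valid_run e r -> uniq (Kof r) /\
  forall v a b, a \in Kof r -> b \in Kof r -> a \in open_ball3 e v ->
    b \in open_ball3 e v -> a = b.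
Proof.
elim/last_ind: r => [|r p IH] Hv; first by split.
have [Hv' _ _] := valid_rcons Hv; have [Hu Hp] := IH Hv'.
have key := run_key Hv.
have Hfar : forall q, q \in r -> forall v, q.1 \in open_ball3 e v ->
    p.1 \in open_ball3 e v -> False.
  move=> q Hq v; rewrite !inE => Ha Hb.
  have [M [h1 h2 h3 h4]] := key q Hq.
  have t1 := dist_tri p.1 q.1 q.2. have t2 := dist_tri q.1 v p.1.
  have t3 := ecc_tri q.1 v. have s1 := dist_sym p.1 q.1.
  have s2 := dist_sym q.1 v. lia.
have Hneq : p.1 \notin Kof r.
  apply/mapP => [[q Hq Eq]]; have [M [h1 h2 h3 h4]] := key q Hq.
  rewrite Eq h4 in h2; by rewrite ltnNge h2 in h1.
split; first by rewrite /Kof map_rcons rcons_uniq Hneq Hu.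
move=> v a b Ha Hb Ba Bb; move: Ha Hb Ba Bb; rewrite /Kof map_rcons !mem_rcons.
rewrite !in_cons.
move=> /orP [/eqP -> | Ha] /orP [/eqP -> | Hb] Ba Bb //.
- case/mapP: Hb Bb => q Hq -> Bb; case: (Hfar q Hq v Bb Ba).
- case/mapP: Ha Ba => q Hq -> Ba; case: (Hfar q Hq v Ba Bb).
- exact: Hp Ha Hb Ba Bb.
Qed.

Lemma size_le_pi r : valid_run e r -> size r <= pi_third e.
Proof.
move=> Hr; have [Hu Hp] := run_pack Hr.
have -> : size r = #|[set a in Kof r]|.
  by rewrite cardsE (card_uniqP Hu) size_map.
apply: (leq_bigmax_cond [set a in Kof r]).
apply/forallP => v; apply/card_le1_eqP => a b.
rewrite !in_setI => /andP [Ha Ba] /andP [Hb Bb]; rewrite !in_set in Ha Hb; exact: Hp Hb Ha Bb Ba.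
Qed.

Lemma pack_cert (P U : {set T}) : packing (closed_ball1 e) P -> diam_certificate e U ->
  #|P| <= #|U|.
Proof.
move=> /forallP HP /forallP HU.
pose f p := odflt p [pick x in U | dist e p x + ecc e x <= diam e].
have Hf : forall p, f p \in U /\ dist e p (f p) + ecc e (f p) <= diam e.
  move=> p; rewrite /f; case: pickP => [x /andP [h1 h2] | H] /=; first by split.
  have [x h1 h2] := eU_ex (HU p); by move: (H x); rewrite h1 h2.
have inj : {in P &, injective f}.
  move=> p1 p2 H1 H2 E; have := HP (f p1) => /card_le1_eqP; apply.
  - rewrite in_setI H2 /= in_set E; have [_ h] := Hf p2; rewrite dist_sym; lia.
  - rewrite in_setI H1 /= in_set; have [_ h] := Hf p1; rewrite dist_sym; lia.
rewrite -(card_in_imset inj); apply: subset_leq_card.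
apply/subsetP => y /imsetP [p _ ->]; exact: (Hf p).1.
Qed.

Lemma pi_kappa : pi_closed1 e <= kappa e.
Proof.
apply/bigmax_leqP => P HP; rewrite /kappa.
apply: (big_ind (fun m => #|P| <= m)).
- exact: max_card.
- move=> a b ha hb; by rewrite leq_min ha hb.
- move=> U HU; exact: pack_cert.
Qed.

End Proofs.

Theorem theorem4 :
  exists c : nat,
  forall (T : finType) (e : rel T),
    0 < #|T| -> symmetric e -> irreflexive e -> (forall u v, connect e u v) ->
    (* termination: every unfinished run can be continued, and every run
       uses O(pi_{1/3}) queries *)
    (forall r : seq (T * T), valid_run e r -> ~~ stopped e r ->
       exists p, valid_run e (rcons r p)) /\
    (forall r : seq (T * T), valid_run e r -> 2 * size r <= c * pi_third e) /\
    (* correctness of the output of a finished run *)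
    (forall r : seq (T * T), valid_run e r -> stopped e r ->
       forall b, b \in Kof r -> ecc e b = \max_(w <- Kof r) ecc e w ->
         [/\ ecc e b = diam e,
             diam_certificate e (Uof r),
             #|Uof r| <= pi_third e
           & #|Uof r| * pi_closed1 e <= pi_third e * kappa e]).
Proof.
exists 2 => T e HT e_sym _ _; split; last split.
- move=> r Hr Hs.
  have [u Hu] : exists u, forall v, oleq (eU e (Uof r) v) (eU e (Uof r) u).
    case: (pickP (fun v => eU e (Uof r) v == None)) => [u /eqP Hu | H].
      by exists u => v; rewrite Hu; case: (eU e (Uof r) v).
    have [x0 _] := card_gt0P HT.
    have [u _ Hu] := @arg_maxnP T x0 xpredT (fun v => odflt 0 (eU e (Uof r) v)) isT.
    exists u => v; have := Hu v isT; have := H v; have := H u.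
    by case: (eU e (Uof r) v); case: (eU e (Uof r) u).
  exists (u, u); apply: valid_rconsI => //; split => //=.
  by rewrite dist0.
- move=> r Hr; rewrite leq_mul2l; apply/orP; right; exact: size_le_pi.
- move=> r Hr Hst b Hb Hbe.
  have Hd : ecc e b = diam e.
    apply/eqP; rewrite eqn_leq ecc_diam /= Hbe /diam.
    apply/bigmax_leqP => w _.
    have := eU_ge e (Uof r) w; have := forallP Hst w.
    case: (eU e (Uof r) w) => //= a h1 h2; exact: leq_trans h2 h1.
  have Hcert : diam_certificate e (Uof r).
    apply/forallP => v; rewrite -Hd Hbe; exact: forallP Hst v.
  have HUr : #|Uof r| <= pi_third e.
    apply: leq_trans (size_le_pi e_sym Hr).
    rewrite /Uof cardsE; apply: leq_trans (card_size _) _; by rewrite size_map.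
  split => //.
  apply: leq_mul => //; exact: pi_kappa.
Qed.
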